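(* Let $n,k,r$ be integers with $k,r\geq 2$, $n\geq 2k$ and $k<r$. Then every vertex-$k$-maximal $r$-uniform hypergraph $H$ on $n$ vertices satisfies $|E(H)|=\binom{n}{r}-\binom{n-k}{r}$.
   Context: Binomial coefficients satisfy $\binom{a}{b}=0$ when $b>a$. A hypergraph $H=(V,E)$ consists of a finite vertex set $V$ and a set $E$ of non-empty subsets of $V$ (edges); it is $r$-uniform if all edges have exactly $r$ elements. The complement $H^c$ has as edges the $r$-subsets of $V$ not in $E$. A subhypergraph is $H'=(V',E')$ with $V'\subseteq V$, $E'\subseteq E$. $H+e=(V,E\cup\{e\})$ for $e\in E(H^c)$. $H-Y$ is the hypergraph induced on $V\setminus Y$ (keeping edges contained in $V\setminus Y$). Connectedness is defined via paths (alternating sequences of distinct vertices and distinct edges with consecutive vertices in the intermediate edge). A vertex-cut is a set $X$ with $H-X$ disconnected. $\kappa(H)$ is the minimum size of a vertex-cut if one exists, and $|V(H)|-1$ otherwise. $\overline{\kappa}(H)=\max\{\kappa(H'): H'\subseteq H\}$. An $r$-uniform hypergraph $H$ is vertex-$k$-maximal if $\overline{\kappa}(H)\leq k$ but $\overline{\kappa}(H+e)\geq k+1$ for every $e\in E(H^c)$. *)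

(* Defs.v *)
From Stdlib Require Import ClassicalDescription.
From mathcomp Require Import all_boot.
Set Implicit Arguments. Unset Strict Implicit. Unset Printing Implicit Defensive.

Definition asbool (P : Prop) : bool :=
  if excluded_middle_informative P then true else false.

Section Hypergraphs.
Variable V : finType.

Definition hgraph := ({set V} * {set {set V}})%type.

Definition hverts (H : hgraph) : {set V} := H.1.
Definition hedges (H : hgraph) : {set {set V}} := H.2.

Definition is_hgraph (H : hgraph) : Prop :=
  forall e, e \in hedges H -> e != set0 /\ e \subset hverts H.

Definition uniform (r : nat) (H : hgraph) : Prop :=
  forall e, e \in hedges H -> #|e| = r.

Definition subhg (H' H : hgraph) : Prop :=
  [/\ is_hgraph H', hverts H' \subset hverts H & hedges H' \subset hedges H].

Definition add_edge (H : hgraph) (e : {set V}) : hgraph := (hverts H, e |: hedges H).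

Definition del_verts (H : hgraph) (Y : {set V}) : hgraph :=
  (hverts H :\: Y, [set e in hedges H | e \subset hverts H :\: Y]).

(* A path from u to v: distinct vertices u = x_0, x_1, ..., x_m = v and
   distinct edges e_1, ..., e_m of H with x_{i-1}, x_i in e_i. *)
Definition hpath (H : hgraph) (u v : V) : Prop :=
  exists (xs : seq V) (es : seq {set V}),
    [/\ size es = size xs, uniq (u :: xs), uniq es, last u xs = v &
        all (fun e => e \in hedges H) es] /\
        (forall i, i < size xs ->
          (nth u (u :: xs) i \in nth set0 es i) /\ (nth u xs i \in nth set0 es i)).

Definition connected (H : hgraph) : Prop :=
  forall u v, u \in hverts H -> v \in hverts H -> hpath H u v.

Definition vertex_cut (H : hgraph) (X : {set V}) : Prop :=
  X \subset hverts H /\ ~ connected (del_verts H X).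

(* kappa(H): minimum size of a vertex cut if one exists, |V(H)|-1 otherwise.
   (Every vertex cut has size <= |V(H)| - 2, so the default value does not
   interfere with the minimum.)  For the empty hypergraph |V|-1 is truncated
   to 0 in nat. *)
Definition kappa (H : hgraph) : nat :=
  \big[minn/#|hverts H|.-1]_(X : {set V} | asbool (vertex_cut H X)) #|X|.

Definition kappa_bar (H : hgraph) : nat :=
  \max_(H' : hgraph | asbool (subhg H' H)) kappa H'.

Definition vertex_k_maximal (r k : nat) (H : hgraph) : Prop :=
  kappa_bar H <= k /\
  forall e : {set V}, #|e| = r -> e \subset hverts H -> e \notin hedges H ->
    k.+1 <= kappa_bar (add_edge H e).

End Hypergraphs.

(* Main.v *)
Require Import Defs.
From Stdlib Require Import Classical ClassicalDescription.
From mathcomp Require Import all_boot zify.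
Set Implicit Arguments. Unset Strict Implicit. Unset Printing Implicit Defensive.


Lemma asboolT (P : Prop) : P -> asbool P.
Proof. by rewrite /asbool; case: excluded_middle_informative. Qed.
Lemma asboolE (P : Prop) : asbool P -> P.
Proof. by rewrite /asbool; case: excluded_middle_informative. Qed.

Lemma bigmin_le (I : finType) (P : pred I) (F : I -> nat) d i :
  P i -> \big[minn/d]_(j | P j) F j <= F i.
Proof.
move=> Pi; have : i \in index_enum I by rewrite mem_index_enum.
elim: (index_enum I) => [|j s IH] //; rewrite big_cons in_cons.
case/orP => [/eqP <-|/IH h]; first by rewrite Pi geq_minl.
by case: (P j) => //; rewrite geq_min h orbT.
Qed.

Lemma kappa_le_cut (V : finType) (H : hgraph V) (X : {set V}) :
  vertex_cut H X -> kappa H <= #|X|.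
Proof.
move=> hX; rewrite /kappa; apply: (@bigmin_le _ (fun X => asbool (vertex_cut H X))); exact: asboolT.
Qed.

Lemma kappa_le_card (V : finType) (H : hgraph V) : kappa H <= #|hverts H|.-1.
Proof.
rewrite /kappa; elim/big_rec: _ => // i x _ hx.
by rewrite geq_min hx orbT.
Qed.

Lemma kappa_small_cut (V : finType) (H : hgraph V) k :
  kappa H <= k -> k < #|hverts H|.-1 -> exists X, vertex_cut H X /\ #|X| <= k.
Proof.
move=> hk hd; apply: NNPP => hno.
have : k < kappa H.
  rewrite /kappa; elim/big_rec: _ => // X x hX hx.
  rewrite leq_min hx andbT ltnNge; apply/negP => hle.
  by apply: hno; exists X; split => //; apply: asboolE.
by rewrite ltnNge hk.
Qed.

Lemma kappa_bar_ge (V : finType) (H H' : hgraph V) :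
  subhg H' H -> kappa H' <= kappa_bar H.
Proof. by move=> h; rewrite /kappa_bar (leq_bigmax_cond H') ?asboolT. Qed.

Lemma kappa_bar_witness (V : finType) (H : hgraph V) k :
  k < kappa_bar H -> exists H', subhg H' H /\ k < kappa H'.
Proof.
move=> hk; apply: NNPP => hno.
have : kappa_bar H <= k.
  apply/bigmax_leqP => H' /asboolE hs; rewrite leqNgt; apply/negP => hlt.
  by apply: hno; exists H'.
by rewrite leqNgt hk.
Qed.


Definition hp (V : finType) (E : {set {set V}}) (u : V) (xs : seq V) (es : seq {set V}) :=
  [/\ size es = size xs, uniq (u :: xs), uniq es & all (fun e => e \in E) es] /\
  (forall i, i < size xs -> (nth u (u :: xs) i \in nth set0 es i) /\ (nth u xs i \in nth set0 es i)).

Lemma hpathP (V : finType) (H : hgraph V) u v :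
  hpath H u v <-> exists xs es, hp (hedges H) u xs es /\ last u xs = v.
Proof.
split.
  by case=> xs [es [[h1 h2 h3 h4 h5] h6]]; exists xs, es; split=> //; split.
by case=> xs [es [[[h1 h2 h3 h5] h6] h4]]; exists xs, es; split=> //; split.
Qed.

Lemma hp_closed (V : finType) (E : {set {set V}}) (S : {set V}) u xs es :
  hp E u xs es -> u \in S ->
  (forall f, f \in E -> forall x y, x \in f -> y \in f -> x \in S -> y \in S) ->
  last u xs \in S.
Proof.
case=> [[h1 h2 h3 h4] h5] uS cl.
suff: forall i, i <= size xs -> nth u (u :: xs) i \in S.
  by move/(_ (size xs) (leqnn _)); rewrite (last_nth u).
elim=> [|i IH] hi //=.
have hi' : i < size xs by [].
case: (h5 i hi') => ha hb.
apply: (cl (nth set0 es i)) ha hb (IH (ltnW hi)).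
by apply: (allP h4); apply: mem_nth; rewrite h1.
Qed.

Lemma hp_take (V : finType) (E : {set {set V}}) u xs es i :
  hp E u xs es -> i <= size xs ->
  hp E u (take i xs) (take i es) /\ last u (take i xs) = nth u (u :: xs) i.
Proof.
case=> [[h1 h2 h3 h4] h5] hi.
have st : size (take i xs) = i by rewrite size_takel.
have se : size (take i es) = i by rewrite size_takel // h1.
have hc : u :: take i xs = take i.+1 (u :: xs) by [].
split; last by rewrite (last_nth u) hc nth_take st.
split.
  split.
  - by rewrite st se.
  - by rewrite hc take_uniq.
  - by rewrite take_uniq.
  - by apply/allP => f /mem_take hf; apply: (allP h4).
move=> j; rewrite st => hj.
have hj' : j < size xs by apply: leq_trans hj hi.
rewrite hc !nth_take //; last by apply: ltnW.
exact: h5.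
Qed.

Lemma hp_rcons (V : finType) (E : {set {set V}}) u xs es y f :
  hp E u xs es -> y \notin u :: xs -> f \notin es -> f \in E ->
  last u xs \in f -> y \in f -> hp E u (rcons xs y) (rcons es f).
Proof.
case=> [[h1 h2 h3 h4] h5] hy hf fE hl yf.
split.
  split.
  - by rewrite !size_rcons h1.
  - by rewrite -rcons_cons rcons_uniq hy.
  - by rewrite rcons_uniq hf.
  - by rewrite all_rcons fE.
move=> j; rewrite size_rcons ltnS leq_eqVlt => /orP [/eqP ->|hj].
  rewrite -rcons_cons !nth_rcons /= ltnS leqnn -h1 ltnn eqxx.
  by rewrite h1 -(last_nth u).
rewrite -rcons_cons !nth_rcons /= ltnS (ltnW hj) hj h1 hj.
exact: h5.
Qed.

Lemma hpath_ext (V : finType) (H : hgraph V) u x y f :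
  hpath H u x -> f \in hedges H -> x \in f -> y \in f -> hpath H u y.
Proof.
move/hpathP=> [xs [es [hpe hl]]] fE xf yf; apply/hpathP.
have [h1 h2 h3 h4] := hpe.1.
case hyin: (y \in u :: xs).
  have hi : index y (u :: xs) <= size xs by rewrite -ltnS; rewrite index_mem.
  have [ht htl] := hp_take hpe hi.
  by exists (take (index y (u :: xs)) xs), (take (index y (u :: xs)) es); rewrite htl nth_index.
set j := index f es.
have hj : j <= size xs by rewrite -h1 /j index_size.
have [ht htl] := hp_take hpe hj.
have zf : nth u (u :: xs) j \in f.
  case: (ltnP j (size es)) => hje.
    have := (hpe.2 j (leq_trans hje (eq_leq h1))).1.
    by rewrite /j nth_index // -index_mem.
  have -> : j = size xs by apply/eqP; rewrite eqn_leq hj -h1.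
  by rewrite -(last_nth u) hl.
exists (rcons (take j xs) y), (rcons (take j es) f); split; last by rewrite last_rcons.
apply: hp_rcons => //.
- apply/negP => hin; move/negbT: hyin => /negP; apply.
  move: hin; rewrite !in_cons => /orP [->//|/mem_take ->]; by rewrite orbT.
- apply/negP => hin.
  have : index f (take j es ++ drop j es) = index f (take j es) by rewrite index_cat hin.
  rewrite cat_take_drop -/j => hjj.
  have : index f (take j es) < size (take j es) by rewrite index_mem.
  by rewrite -hjj size_takel ?ltnn // h1.
- by rewrite htl.
Qed.


Lemma sep_kappa (V : finType) (H' : hgraph V) (Y S : {set V}) u v :
  Y \subset hverts H' -> u \in hverts H' :\: Y -> v \in hverts H' :\: Y ->
  u \in S -> v \notin S ->
  (forall f, f \in hedges H' -> f \subset hverts H' :\: Y ->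
     forall x y, x \in f -> y \in f -> x \in S -> y \in S) ->
  kappa H' <= #|Y|.
Proof.
move=> hY hu hv uS vS cl; apply: kappa_le_cut; split=> // hc.
have /hpathP [xs [es [hpe hl]]] := hc u v hu hv.
suff : last u xs \in S by rewrite hl (negbTE vS).
apply: (hp_closed hpe uS) => f; rewrite /del_verts /hedges /= inE => /andP [fE fs].
exact: cl.
Qed.

Lemma subhg_drop (V : finType) (H' : hgraph V) (W : {set V}) (E : {set {set V}}) (e : {set V}) :
  subhg H' (W, e |: E) -> e \notin hedges H' -> subhg H' (W, E).
Proof.
case=> h1 h2 h3 he; split=> //; apply/subsetP => f hf.
have := subsetP h3 f hf; rewrite /hedges /= in_setU1 => /orP [/eqP hfe|//].
by move: he; rewrite -hfe hf.
Qed.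

Lemma exists_sub (V : finType) (A : {set V}) n :
  n <= #|A| -> exists B : {set V}, B \subset A /\ #|B| = n.
Proof.
move=> hn; pose s : seq V := take n (enum A).
exists [set x in s]; split.
  by apply/subsetP => x; rewrite inE => /mem_take; rewrite mem_enum.
rewrite cardsE; rewrite (card_uniqP _); first by rewrite size_takel // -cardE.
by apply: take_uniq; apply: enum_uniq.
Qed.

Definition wfE (V : finType) r (W : {set V}) (E : {set {set V}}) :=
  forall e, e \in E -> #|e| = r /\ e \subset W.

Lemma wf_hgraph (V : finType) r (W : {set V}) E :
  0 < r -> wfE r W E -> is_hgraph (W, E).
Proof.
move=> r0 wf e he; have [h1 h2] := wf e he; split=> //.
by apply/eqP => e0; move: h1; rewrite e0 cards0 => h; rewrite -h in r0.
Qed.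

Lemma subhg_refl (V : finType) (H : hgraph V) : is_hgraph H -> subhg H H.
Proof. by move=> h; split. Qed.

Lemma subhg_trans (V : finType) (H1 H2 H3 : hgraph V) :
  subhg H1 H2 -> subhg H2 H3 -> subhg H1 H3.
Proof.
case=> a1 a2 a3 [b1 b2 b3]; split=> //; [exact: subset_trans a2 b2|exact: subset_trans a3 b3].
Qed.

Lemma sub_edge_size (V : finType) r (H' : hgraph V) (W : {set V}) (E : {set {set V}}) (e : {set V}) :
  wfE r W E -> #|e| = r -> subhg H' (W, e |: E) ->
  forall f, f \in hedges H' -> #|f| = r.
Proof.
move=> wf he [_ _ h3] f hf; have := subsetP h3 f hf.
by rewrite /hedges /= in_setU1 => /orP [/eqP ->|/wf []].
Qed.

Lemma small_case (V : finType) r k (W : {set V}) (E : {set {set V}}) :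
  2 <= k -> k < r -> wfE r W E -> vertex_k_maximal r k (W, E) ->
  #|W| - k < r -> E = [set e : {set V} | e \subset W & #|e| == r].
Proof.
move=> k2 kr wf [hbar hmax] hW.
apply/setP => e; rewrite inE; apply/idP/idP.
  by move/wf => [-> ->]; rewrite eqxx.
case/andP => eW /eqP er; apply: NNPP => /negP eE.
have [[V' E'] [hs hk]] := kappa_bar_witness (hmax e er eW eE).
have hsz := sub_edge_size wf er hs.
case: hs => hs1 hs2 hs3; move: hs2 hsz hk; rewrite /hverts /hedges /= => hs2 hsz hk.
set t := #|V'|.
have htW : t <= #|W| by apply: subset_leq_card.
case: (leqP t k.+1) => ht.
  have := kappa_le_card (V', E'); rewrite /hverts /= -/t => h.
  have : kappa (V', E') <= k by apply: leq_trans h _; rewrite -subn1 leq_subLR add1n.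
  by rewrite leqNgt hk.
have [Z [ZV hZ]] : exists Z : {set V}, Z \subset V' /\ #|Z| = maxn 2 (t - k).
  apply: (@exists_sub _ V'); rewrite geq_max -/t; apply/andP; split.
    by apply: leq_trans k2 _; apply: leq_trans (leqnSn k) (ltnW ht).
  exact: leq_subr.
have /card_gt1P [u [v [uZ vZ uv]]] : 1 < #|Z| by rewrite hZ leq_maxl.
have hVY : V' :\: (V' :\: Z) = Z by rewrite setDDr setDv set0U; apply/setIidPr.
have : kappa (V', E') <= #|V' :\: Z|.
  apply: (@sep_kappa _ _ _ [set u] u v); rewrite /hverts /hedges /= ?hVY ?inE ?eqxx //.
  - exact: subsetDl.
  - by rewrite eq_sym.
  move=> f fE fZ; have := hsz f fE; have := subset_leq_card fZ; rewrite hZ => h1 h2.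
  exfalso; move: h1; rewrite h2 leq_max => /orP [h|h].
    by move: (leq_ltn_trans k2 kr); rewrite ltnNge h.
  have : r <= #|W| - k by apply: leq_trans h _; apply: leq_sub2r.
  by rewrite leqNgt hW.
rewrite cardsDS // hZ => h.
have : kappa (V', E') <= k.
  apply: leq_trans h _; rewrite leq_subLR.
  apply: (@leq_trans (k + (t - k))); first by rewrite -leq_subLR.
  by rewrite addnC leq_add2r leq_maxr.
by rewrite leqNgt hk.
Qed.


Lemma disjP (T : finType) (A B : {set T}) :
  [disjoint A & B] <-> (forall x, x \in A -> x \in B -> False).
Proof.
split=> [h x xA xB|h]; first by move: (disjointFr h xA); rewrite xB.
rewrite -setI_eq0; apply/eqP/setP => x; rewrite !inE.
by case xA: (x \in A); case xB: (x \in B) => //; exfalso; apply: (h x).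
Qed.

Definition split_ok (V : finType) k (W : {set V}) (E : {set {set V}}) (X P Q : {set V}) :=
  [/\ X :|: P :|: Q = W, [disjoint X & P], [disjoint X & Q], [disjoint P & Q] &
   [/\ #|X| = k, (forall f, f \in E -> [disjoint f & X] -> f \subset P \/ f \subset Q),
       P != set0 & Q != set0]].

Lemma split_sym (V : finType) k (W : {set V}) E X P Q :
  split_ok k W E X P Q -> split_ok k W E X Q P.
Proof.
case=> h1 h2 h3 h4 [h5 h6 h7 h8]; split=> //; first by rewrite setUAC.
  by rewrite disjoint_sym.
split=> // f fE fX; case: (h6 f fE fX) => ?; by [right|left].
Qed.

Lemma closure_side (V : finType) (P Q f : {set V}) x y :
  [disjoint P & Q] -> f \subset P \/ f \subset Q -> x \in f -> y \in f -> x \in P -> y \in P.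
Proof.
move=> hPQ [fP|fQ] xf yf xP; first exact: (subsetP fP).
by move: (disjointFr hPQ xP); rewrite (subsetP fQ).
Qed.

Lemma sepX (V : finType) k (W : {set V}) E X P Q (e : {set V}) (H' : hgraph V) u v :
  split_ok k W E X P Q -> subhg H' (W, e |: E) ->
  ([disjoint e & X] -> e \subset P \/ e \subset Q) ->
  u \in hverts H' -> u \in P -> v \in hverts H' -> v \in Q -> kappa H' <= k.
Proof.
case=> h1 h2 h3 h4 [h5 h6 h7 h8] [hs1 hs2 hs3] he uV uP vV vQ.
rewrite -h5; apply: leq_trans (subset_leq_card (subsetIl X (hverts H'))).
apply: (@sep_kappa _ _ _ P u v).
- exact: subsetIr.
- by rewrite !inE uV andbT (disjointFl h2 uP).
- by rewrite !inE vV andbT (disjointFl h3 vQ).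
- done.
- by rewrite (disjointFl h4 vQ).
move=> f fE' fs x y xf yf xP.
have fX : [disjoint f & X].
  apply: (proj2 (disjP _ _)) => z zf zX; move: (subsetP fs z zf); rewrite !inE zX /=.
  by case/andP => /negP hn /hn.
apply: (closure_side h4 _ xf yf xP).
move: (subsetP hs3 f fE'); rewrite /hedges /= in_setU1 => /orP [/eqP fe | fE].
  by rewrite fe; apply: he; rewrite -fe.
exact: h6.
Qed.


Lemma drop_le (V : finType) r k (W : {set V}) E (e : {set V}) (H' : hgraph V) :
  vertex_k_maximal r k (W, E) -> subhg H' (W, e |: E) -> e \notin hedges H' ->
  kappa H' <= k.
Proof.
move=> [hbar _] hs he; apply: leq_trans hbar.
exact: kappa_bar_ge (subhg_drop hs he).
Qed.

Lemma inW3 (V : finType) (W X P Q : {set V}) x :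
  X :|: P :|: Q = W -> x \in W -> x \notin X :|: P -> x \in Q.
Proof. by move=> <-; rewrite !inE => /orP [->//|->]. Qed.

Lemma cross_in (V : finType) r k (W : {set V}) E X P Q (e : {set V}) :
  wfE r W E -> vertex_k_maximal r k (W, E) -> split_ok k W E X P Q ->
  e \subset W -> #|e| = r -> ~~ [disjoint e & X] ->
  ~~ (e \subset X :|: P) -> ~~ (e \subset X :|: Q) -> e \in E.
Proof.
move=> wf hm hsp eW er eX eP eQ; apply: NNPP => /negP eE.
have [H' [hs hk]] := kappa_bar_witness (hm.2 e er eW eE).
case: (boolP (e \in hedges H')) => eH; last by move: (drop_le hm hs eH); rewrite leqNgt hk.
have eV : e \subset hverts H' by have [h _ _] := hs; case: (h e eH).
have [h1 _ _ _ _] := hsp.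
have [v ve vXP] := subsetPn eP.
have [u ue uXQ] := subsetPn eQ.
have h1' : X :|: Q :|: P = W by rewrite setUAC.
have := sepX hsp hs (fun d => False_ind _ (negP eX d)) (subsetP eV u ue)
  (inW3 h1' (subsetP eW u ue) uXQ) (subsetP eV v ve) (inW3 h1 (subsetP eW v ve) vXP).
by rewrite leqNgt hk.
Qed.

Lemma side_max (V : finType) r k (W : {set V}) E X P Q :
  k < r -> wfE r W E -> vertex_k_maximal r k (W, E) -> split_ok k W E X P Q ->
  wfE r (X :|: P) [set f in E | f \subset X :|: P] /\
  vertex_k_maximal r k (X :|: P, [set f in E | f \subset X :|: P]).
Proof.
move=> kr wf hm hsp.
have [h1 h2 h3 h4 [h5 h6 h7 h8]] := hsp.
set EP := [set f in E | f \subset X :|: P].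
have XPW : X :|: P \subset W by rewrite -h1 subsetUl.
have wfP : wfE r (X :|: P) EP.
  by move=> f; rewrite inE => /andP [/wf [-> _] ->].
have r0 : 0 < r by apply: leq_ltn_trans kr.
have sPW : subhg (X :|: P, EP) (W, E).
  split=> //; first exact: wf_hgraph wfP.
  by apply/subsetP => f; rewrite /hedges /= inE => /andP [].
split=> //; split.
  apply/bigmax_leqP => H' /asboolE hs.
  apply: leq_trans hm.1; exact: kappa_bar_ge (subhg_trans hs sPW).
move=> e er eXP eEP.
have eE : e \notin E by apply/negP => eE; move: eEP; rewrite /hedges /= inE eE eXP.
have eW : e \subset W := subset_trans eXP XPW.
have [H' [hs hk]] := kappa_bar_witness (hm.2 e er eW eE).
case: (boolP (e \in hedges H')) => eH; last by move: (drop_le hm hs eH); rewrite leqNgt hk.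
have eV : e \subset hverts H' by have [h _ _] := hs; case: (h e eH).
have VXP : hverts H' \subset X :|: P.
  apply: NNPP => /negP /subsetPn [v vV vXP].
  have vW : v \in W by have [_ h _] := hs; exact: (subsetP h).
  have eX : ~~ (e \subset X).
    apply/negP => /subset_leq_card; rewrite er h5 leqNgt kr //.
  have [u ue uX] := subsetPn eX.
  have uP : u \in P by move: (subsetP eXP u ue); rewrite inE (negbTE uX).
  have he : [disjoint e & X] -> e \subset P \/ e \subset Q.
    move=> d; left; apply/subsetP => x xe.
    by move: (subsetP eXP x xe); rewrite inE (disjointFr d xe).
  have := sepX hsp hs he (subsetP eV u ue) uP vV (inW3 h1 vW vXP).
  by rewrite leqNgt hk.
apply: leq_trans hk _; apply: kappa_bar_ge.
have [hs1 hs2 hs3] := hs; split=> //.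
apply/subsetP => f fH; move: (subsetP hs3 f fH); rewrite /hedges /= !in_setU1.
case/orP => [->//|fE]; apply/orP; right; rewrite inE fE /=.
have [_ fV] := hs1 f fH; exact: subset_trans fV VXP.
Qed.


Lemma card3 (T : finType) (S1 S2 S3 : {set T}) :
  [disjoint S1 & S2] -> [disjoint S1 & S3] -> [disjoint S2 & S3] ->
  #|S1 :|: S2 :|: S3| = #|S1| + #|S2| + #|S3|.
Proof.
move=> d12 d13 d23.
rewrite cardsU (disjoint_setI0 (_ : [disjoint S1 :|: S2 & S3])) ?cards0 ?subn0; last first.
  apply: (proj2 (disjP _ _)) => x; rewrite inE => /orP [h|h] h3.
    by move: (disjointFr d13 h); rewrite h3.
  by move: (disjointFr d23 h); rewrite h3.
by rewrite cardsU (disjoint_setI0 d12) cards0 subn0.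
Qed.

Lemma sub_both (V : finType) (X P Q f : {set V}) :
  [disjoint P & Q] -> f \subset X :|: P -> f \subset X :|: Q -> f \subset X.
Proof.
move=> d fP fQ; apply/subsetP => x xf.
move: (subsetP fP x xf) (subsetP fQ x xf); rewrite !inE.
case: (x \in X) => //= xP xQ; by move: (disjointFr d xP); rewrite xQ.
Qed.

Lemma sub_XP (V : finType) (X P f : {set V}) :
  f \subset X :|: P -> [disjoint f & X] -> f \subset P.
Proof.
move=> fP d; apply/subsetP => x xf; move: (subsetP fP x xf).
by rewrite inE (disjointFr d xf).
Qed.

Lemma sub_disj (V : finType) (X P f : {set V}) :
  [disjoint X & P] -> f \subset P -> [disjoint f & X].
Proof.
move=> d fP; apply: (proj2 (disjP _ _)) => x xf xX.
by move: (disjointFr d xX); rewrite (subsetP fP x xf).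
Qed.

Lemma count_split (V : finType) r k (W : {set V}) E X P Q :
  k < r -> wfE r W E -> vertex_k_maximal r k (W, E) -> split_ok k W E X P Q ->
  #|[set f in E | f \subset X :|: P]| = 'C(#|X :|: P|, r) - 'C(#|X :|: P| - k, r) ->
  #|[set f in E | f \subset X :|: Q]| = 'C(#|X :|: Q|, r) - 'C(#|X :|: Q| - k, r) ->
  #|E| = 'C(#|W|, r) - 'C(#|W| - k, r).
Proof.
move=> kr wf hm hsp hP hQ.
have [h1 h2 h3 h4 [h5 h6 h7 h8]] := hsp.
pose PW (U : {set V}) := [set e : {set V} | e \subset U & #|e| == r].
have cPW U : #|PW U| = 'C(#|U|, r) by rewrite cards_draws.
have PWS (U1 U2 : {set V}) : U1 \subset U2 -> PW U1 \subset PW U2.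
  move=> s; apply/subsetP => e; rewrite !inE => /andP [eU ->]; rewrite andbT.
  exact: subset_trans eU s.
have noX (f : {set V}) : f \subset X -> #|f| = r -> False.
  by move=> /subset_leq_card; rewrite h5 => h hr; move: h; rewrite hr leqNgt kr.
have dXPQ : [disjoint X & P :|: Q].
  apply: (proj2 (disjP _ _)) => x xX; rewrite inE => /orP [xP|xQ].
    by move: (disjointFr h2 xX); rewrite xP.
  by move: (disjointFr h3 xX); rewrite xQ.
have cXP : #|X :|: P| - k = #|P|.
  by rewrite cardsU (disjoint_setI0 h2) cards0 subn0 h5 addKn.
have cXQ : #|X :|: Q| - k = #|Q|.
  by rewrite cardsU (disjoint_setI0 h3) cards0 subn0 h5 addKn.
have hW : W = X :|: (P :|: Q) by rewrite setUA.
have cW : #|W| - k = #|P :|: Q|.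
  by rewrite hW cardsU (disjoint_setI0 dXPQ) cards0 subn0 h5 addKn.
rewrite cW -cPW -cPW.
set EP := [set f in E | f \subset X :|: P].
set EQ := [set f in E | f \subset X :|: Q].
set Cr := [set f in E | ~~ (f \subset X :|: P) & ~~ (f \subset X :|: Q)].
have hE : E = EP :|: EQ :|: Cr.
  apply/setP => f; rewrite !inE.
  by case: (f \in E); case: (f \subset X :|: P); case: (f \subset X :|: Q).
have cE : #|E| = #|EP| + #|EQ| + #|Cr|.
  rewrite {1}hE card3 //.
  - apply: (proj2 (disjP _ _)) => f; rewrite !inE => /andP [fE fP] /andP [_ fQ].
    by have [hr _] := wf f fE; apply: noX (sub_both h4 fP fQ) hr.
  - apply: (proj2 (disjP _ _)) => f; rewrite !inE => /andP [_ fP] /andP [_ /andP [nfP _]].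
    by rewrite fP in nfP.
  - apply: (proj2 (disjP _ _)) => f; rewrite !inE => /andP [_ fQ] /andP [_ /andP [_ nfQ]].
    by rewrite fQ in nfQ.
set M := PW W :\: PW (P :|: Q).
set MP := PW (X :|: P) :\: PW P.
set MQ := PW (X :|: Q) :\: PW Q.
set Cr' := [set e in M | ~~ (e \subset X :|: P) & ~~ (e \subset X :|: Q)].
have XPW : X :|: P \subset W by rewrite -h1 subsetUl.
have XQW : X :|: Q \subset W by rewrite -h1; apply/subsetP => x; rewrite !inE => /orP [->|->]; rewrite ?orbT.
have PQW : P :|: Q \subset W by rewrite hW subsetUr.
have mMP (e : {set V}) : e \subset X :|: P -> (e \in M) = (e \in MP).
  move=> eP; rewrite !inE eP (subset_trans eP XPW) /=.
  case: (#|e| == r); rewrite ?andbF // !andbT; congr (~~ _); apply/idP/idP => h.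
    by apply: sub_XP eP (sub_disj dXPQ h).
  exact: subset_trans h (subsetUl _ _).
have mMQ (e : {set V}) : e \subset X :|: Q -> (e \in M) = (e \in MQ).
  move=> eQ; rewrite !inE eQ (subset_trans eQ XQW) /=.
  case: (#|e| == r); rewrite ?andbF // !andbT; congr (~~ _); apply/idP/idP => h.
    by apply: sub_XP eQ (sub_disj dXPQ h).
  exact: subset_trans h (subsetUr _ _).
have MPs (e : {set V}) : e \in MP -> e \subset X :|: P.
  by rewrite !inE => /andP [_ /andP [h _]].
have MQs (e : {set V}) : e \in MQ -> e \subset X :|: Q.
  by rewrite !inE => /andP [_ /andP [h _]].
have hM : M = MP :|: MQ :|: Cr'.
  apply/setP => e; rewrite !in_setU [e \in Cr']inE.
  case eP: (e \subset X :|: P); case eQ: (e \subset X :|: Q); rewrite ?andbF ?andbT /=.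
  - by rewrite -(mMP e eP) -(mMQ e eQ) orbb orbF.
  - have -> : (e \in MQ) = false by apply/negP => /MQs; rewrite eQ.
    by rewrite -(mMP e eP) !orbF.
  - have -> : (e \in MP) = false by apply/negP => /MPs; rewrite eP.
    by rewrite -(mMQ e eQ) !orbF.
  - have -> : (e \in MQ) = false by apply/negP => /MQs; rewrite eQ.
    have -> : (e \in MP) = false by apply/negP => /MPs; rewrite eP.
    done.
have cM : #|M| = #|MP| + #|MQ| + #|Cr'|.
  rewrite {1}hM card3 //.
  - apply: (proj2 (disjP _ _)) => f; rewrite !inE => /andP [_ /andP [fP fr]] /andP [_ /andP [fQ _]].
    by apply: noX (sub_both h4 fP fQ) (eqP fr).
  - apply: (proj2 (disjP _ _)) => f; rewrite !inE => /andP [_ /andP [fP _]] /andP [_ /andP [nfP _]].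
    by rewrite fP in nfP.
  - apply: (proj2 (disjP _ _)) => f; rewrite !inE => /andP [_ /andP [fQ _]] /andP [_ /andP [_ nfQ]].
    by rewrite fQ in nfQ.
have hCr : Cr = Cr'.
  apply/setP => e; rewrite !inE; apply/idP/idP.
    case/andP => eE /andP [nP nQ]; rewrite nP nQ andbT.
    have [er eW] := wf e eE; rewrite eW er eqxx /= !andbT.
    apply/negP => ePQ; case: (h6 e eE (sub_disj dXPQ ePQ)) => s.
      by move: nP; rewrite (subset_trans s (subsetUr _ _)).
    by move: nQ; rewrite (subset_trans s (subsetUr _ _)).
  case/and3P => /and3P [nPQ eW /eqP er] nP nQ; rewrite nP nQ andbT.
  rewrite andbT; apply: (cross_in wf hm hsp eW er) => //.
  apply/negP => d; move: nPQ; rewrite er eqxx andbT (sub_XP _ d) //; by rewrite -hW.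
have cMP : #|MP| = #|EP|.
  by rewrite hP cXP cardsDS ?PWS ?subsetUr // !cPW.
have cMQ : #|MQ| = #|EQ|.
  by rewrite hQ cXQ cardsDS ?PWS ?subsetUr // !cPW.
by rewrite cE -cMP -cMQ hCr -cM cardsDS ?PWS.
Qed.


Lemma hpath_refl (V : finType) (H : hgraph V) u : hpath H u u.
Proof. by exists [::], [::]; split. Qed.

Lemma get_split (V : finType) r k (W : {set V}) E :
  2 <= k -> k < r -> wfE r W E -> vertex_k_maximal r k (W, E) ->
  r <= #|W| - k -> exists X P Q, split_ok k W E X P Q.
Proof.
move=> k2 kr wf hm hWk.
have r0 : 0 < r by apply: leq_ltn_trans kr.
have hk : kappa (W, E) <= k.
  apply: leq_trans hm.1; apply: kappa_bar_ge; apply: subhg_refl; exact: wf_hgraph wf.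
have kW : k.+2 <= #|W|.
  have : 2 < r by apply: leq_ltn_trans k2 kr.
  move: hWk; clear; move=> h1 h2; lia.
have hd : k < #|hverts (W, E)|.-1 by rewrite /hverts /=; move: kW; clear; lia.
have [X0 [[X0W hnc] X0k]] := kappa_small_cut hk hd.
set G := del_verts (W, E) X0.
have [u [v [hu [hv huv]]]] : exists u v, u \in W :\: X0 /\ v \in W :\: X0 /\ ~ hpath G u v.
  apply: NNPP => hno; apply: hnc => u v hu hv; apply: NNPP => hp.
  by apply: hno; exists u, v.
set A0 := [set w in W :\: X0 | asbool (hpath G u w)].
have uA0 : u \in A0 by rewrite inE hu /=; apply: asboolT; exact: hpath_refl.
have vA0 : v \notin A0 by rewrite inE hv /=; apply/negP => /asboolE.
have uv : u != v by apply/eqP => e; move: vA0; rewrite -e uA0.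
have uvW : [set u; v] \subset W :\: X0.
  by apply/subsetP => x; rewrite !inE => /orP [/eqP ->|/eqP ->]; [move: hu|move: hv]; rewrite inE.
have cWX : #|W :\: X0| = #|W| - #|X0| by rewrite cardsDS.
have [D [DS cD]] : exists D : {set V}, D \subset (W :\: X0) :\: [set u; v] /\ #|D| = k - #|X0|.
  apply: exists_sub; rewrite cardsDS // cards2 uv cWX.
  move: kW X0k; clear; lia.
have DW : D \subset W by apply: subset_trans DS _; apply: subset_trans (subsetDl _ _) (subsetDl _ _).
have DX0 : [disjoint X0 & D].
  apply: (proj2 (disjP _ _)) => x xX xD; move: (subsetP DS x xD); rewrite !inE xX.
  by case/andP => _ /andP [].
have uD : u \notin D by apply/negP => /(subsetP DS); rewrite !inE eqxx.
have vD : v \notin D by apply/negP => /(subsetP DS); rewrite !inE eqxx orbT.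
set X := X0 :|: D.
set A := A0 :\: X.
set B := (W :\: X) :\: A.
have memX x : (x \in X) = (x \in X0) || (x \in D) by rewrite /X inE.
have memA x : (x \in A) = (x \notin X) && (x \in A0) by rewrite /A inE.
have memB x : (x \in B) = (x \notin A) && ((x \notin X) && (x \in W)) by rewrite /B !inE.
have memA0 x : (x \in A0) = ((x \notin X0) && (x \in W)) && asbool (hpath G u x) by rewrite /A0 !inE.
have XW : X \subset W.
  by apply/subsetP => x; rewrite memX => /orP [/(subsetP X0W)|/(subsetP DW)].
have A0W : A0 \subset W by apply/subsetP => x; rewrite memA0 => /andP [/andP [_ ->]].
have cX : #|X| = k by rewrite /X cardsU (disjoint_setI0 DX0) cards0 subn0 cD subnKC.
clearbody X A B.
exists X, A, B; split.
- apply/setP => x; rewrite !in_setU memB; apply/idP/idP.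
    case/orP => [/orP [xX|xA]|/andP [_ /andP [_ ->]]] //.
      exact: (subsetP XW).
    by move: xA; rewrite memA => /andP [_ /(subsetP A0W)].
  move=> xW; rewrite xW andbT.
  by case: (x \in X); case: (x \in A).
- by apply: (proj2 (disjP _ _)) => x xX; rewrite memA xX.
- by apply: (proj2 (disjP _ _)) => x xX; rewrite memB xX /= andbF.
- by apply: (proj2 (disjP _ _)) => x xA; rewrite memB xA.
split.
- exact: cX.
- move=> f fE fX.
  have [fr fW] := wf f fE.
  have fX0 : [disjoint f & X0].
    by apply: (proj2 (disjP _ _)) => x xf xX0; move: (disjointFr fX xf); rewrite memX xX0.
  case: (boolP [exists x in f, x \in A]) => hfA.
    left; have [x /andP [xf xA]] := existsP hfA.
    have fG : f \in hedges G.
      rewrite /G /del_verts /hedges /= inE fE /=; apply/subsetP => y yf.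
      by rewrite inE (disjointFr fX0 yf) (subsetP fW y yf).
    move: xA; rewrite memA => /andP [_]; rewrite memA0 => /andP [_ /asboolE hx].
    apply/subsetP => y yf; rewrite memA (disjointFr fX yf) memA0 (disjointFr fX0 yf).
    rewrite (subsetP fW y yf) /=; apply: asboolT; exact: hpath_ext hx fG xf yf.
  right; apply/subsetP => y yf; rewrite memB (disjointFr fX yf) (subsetP fW y yf) andbT /=.
  rewrite ?andbT; apply/negP => yA; move/negP: hfA; apply; apply/existsP; exists y. by apply/andP; split.
- by apply/set0Pn; exists u; rewrite memA uA0 andbT memX negb_or uD andbT; move: hu; rewrite inE => /andP [].
- apply/set0Pn; exists v; rewrite memB memA (negbTE vA0) /= andbF /= memX negb_or vD andbT.
  by move: hv; rewrite inE.
Qed.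


Lemma main_count (V : finType) r k : 2 <= k -> k < r ->
  forall n (W : {set V}) (E : {set {set V}}), #|W| < n -> wfE r W E ->
  vertex_k_maximal r k (W, E) -> #|E| = 'C(#|W|, r) - 'C(#|W| - k, r).
Proof.
move=> k2 kr; elim=> [|n IH] W E hn wf hm //.
case: (ltnP (#|W| - k) r) => hs.
  by rewrite (small_case k2 kr wf hm hs) cards_draws (bin_small hs) subn0.
have [X [P [Q hsp]]] := get_split k2 kr wf hm hs.
have hsp' := split_sym hsp.
have [wfP hmP] := side_max kr wf hm hsp.
have [wfQ hmQ] := side_max kr wf hm hsp'.
have [h1 h2 h3 h4 [h5 h6 h7 h8]] := hsp.
have ltP : #|X :|: P| < n.
  apply: (@leq_trans #|W|) (hn : #|W| <= n); apply: proper_card; apply/properP; split.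
    by rewrite -h1 subsetUl.
  have [v vQ] := set0Pn _ h8; exists v; first by rewrite -h1 inE vQ orbT.
  by rewrite inE negb_or (disjointFl h3 vQ) (disjointFl h4 vQ).
have ltQ : #|X :|: Q| < n.
  apply: (@leq_trans #|W|) (hn : #|W| <= n); apply: proper_card; apply/properP; split.
    by rewrite -h1; apply/subsetP => x; rewrite !inE => /orP [->|->]; rewrite ?orbT.
  have [v vP] := set0Pn _ h7; exists v; first by rewrite -h1 !inE vP orbT.
  by rewrite inE negb_or (disjointFl h2 vP) (disjointFr h4 vP).
exact: (count_split kr wf hm hsp (IH _ _ ltP wfP hmP) (IH _ _ ltQ wfQ hmQ)).
Qed.


Theorem corollary4p3 (n k r : nat) (V : finType) (E : {set {set V}}) :
  2 <= k -> 2 <= r -> 2 * k <= n -> k < r ->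
  #|V| = n ->
  uniform r ([set: V], E) ->
  vertex_k_maximal r k ([set: V], E) ->
  #|E| = 'C(n, r) - 'C(n - k, r).
Proof.
move=> k2 r2 nk kr hV hu hm.
have wf : wfE r [set: V] E by move=> e he; split; [exact: hu | exact: subsetT].
rewrite -hV -cardsT; exact: (main_count k2 kr (ltnSn _) wf hm).
Qed.
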